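(* Let $X$ be a set, let $R_1,R_2$ be binary relations on $X$, and let $x\in X$. Assume that (1) $R_2$ is well-founded, and (2) there exist a set $B_1\subseteq X$, a well-founded relation $R_1'$ on $X$ and a transitive relation $E_1$ on $X$ such that: (2.i) $x\in B_1$, and for all $a,b\in X$, if $a\in B_1$ and $a \xrightarrow{R_1\cup R_2} b$ then $b\in B_1$; (2.ii) for all $a,b$, if $a\in B_1$ and $a\xrightarrow{R_1} b$ then $a\xrightarrow{R_1'} b$; (2.iii) for all $a,b,c$, if $a\xrightarrow{R_1'} b$ and $b\xrightarrow{E_1} c$ then $a\xrightarrow{R_1'} c$; (2.iv) for all $a,b$, if $a\xrightarrow{R_2} b$ then $a\xrightarrow{E_1} b$. Then $\mathsf{Acc}(R_1\cup R_2, x)$ holds.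
   Context: For a relation $R$ on $X$ write $a\xrightarrow{R} b$ for $(a,b)\in R$. $R$ is called well-founded if every element is accessible, i.e. there is no infinite sequence $x_0,x_1,x_2,\dots$ with $x_i\xrightarrow{R}x_{i+1}$ for all $i$. $\mathsf{Acc}(R,x)$ (''$x$ is accessible for $R$'') means that every sequence $x=x_0\xrightarrow{R}x_1\xrightarrow{R}\cdots$ starting from $x$ is finite (constructively: the inductive predicate stating that all $R$-successors of $x$ are accessible). *)

(* Defs.v *)
From Stdlib Require Import Relations.

(* Paper convention: [R a b] means a -R-> b. Accessibility follows R forward:
   x is accessible iff all R-successors of x are accessible.  Stdlib's [Acc]
   follows predecessors, so we use the transposed relation. *)
Definition AccP {X : Type} (R : X -> X -> Prop) (x : X) : Prop :=
  Acc (fun b a => R a b) x.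

Definition WF {X : Type} (R : X -> X -> Prop) : Prop := forall x, AccP R x.

Definition relU {X : Type} (R1 R2 : X -> X -> Prop) : X -> X -> Prop :=
  fun a b => R1 a b \/ R2 a b.

Definition transitive_rel {X : Type} (E : X -> X -> Prop) : Prop :=
  forall a b c, E a b -> E b c -> E a c.

(* Main.v *)
Require Import Defs.

Theorem proposition1 (X : Type) (R1 R2 : X -> X -> Prop) (x : X) :
  WF R2 ->
  (exists (B1 : X -> Prop) (R1' E1 : X -> X -> Prop),
      WF R1' /\ transitive_rel E1 /\
      (B1 x /\ (forall a b, B1 a -> relU R1 R2 a b -> B1 b)) /\
      (forall a b, B1 a -> R1 a b -> R1' a b) /\
      (forall a b c, R1' a b -> E1 b c -> R1' a c) /\
      (forall a b, R2 a b -> E1 a b)) ->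
  AccP (relU R1 R2) x.
Proof.
  intros W2 [B1 [R1' [E1 [W1 [_ [[Bx HB] [H2 [H3 H4]]]]]]]].
  assert (L : forall p, AccP R1' p -> forall y, AccP R2 y -> B1 y -> R1' p y ->
             AccP (relU R1 R2) y).
  { intros p Ap. induction Ap as [p _ IHp].
    intros y Ay. induction Ay as [y _ IHy].
    intros By Hpy. constructor. intros z Hz.
    assert (Bz : B1 z) by (apply (HB y); assumption).
    destruct Hz as [Hz|Hz].
    - apply (IHp y Hpy z (W2 z) Bz). apply H2; assumption.
    - apply IHy; [exact Hz | exact Bz | apply (H3 p y z Hpy); apply H4; exact Hz]. }
  generalize (W2 x). intro Ax. revert Bx. induction Ax as [y _ IHy]. intro By.
  constructor. intros z Hz.
  assert (Bz : B1 z) by (apply (HB y); assumption).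
  destruct Hz as [Hz|Hz].
  - apply (L y (W1 y) z (W2 z) Bz). apply H2; assumption.
  - apply IHy; assumption.
Qed.
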